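(* Let $\Gamma$ be a connected highly-regular graph. Then $\mathrm{I}(\Gamma)=\operatorname{diam}(\Gamma)+1$ if and only if $\Gamma$ is distance-regular.
   Context: All graphs are finite, undirected, without loops or multiple edges; $d(u,v)$, $\operatorname{diam}(\Gamma)$ and $D_i(u)=\{v:d(u,v)=i\}$ denote graph distance, diameter and distance spheres. A graph $\Gamma$ of order $n$ is highly-regular with collapsed adjacency matrix (CAM) $C=[c_{i,j}]_{1\le i,j\le m}$, where $2\le m<n$ (the value $m=n$ is allowed only when $n=2$), if for every vertex $u$ there is a partition of $V(\Gamma)$ into nonempty sets $V_1(u)=\{u\},V_2(u),\dots,V_m(u)$ such that for all $i,j$, every vertex $y\in V_j(u)$ is adjacent to exactly $c_{i,j}$ vertices of $V_i(u)$. The index $\mathrm{I}(\Gamma)$ of a highly-regular graph $\Gamma$ is the least $m$ such that $\Gamma$ is highly-regular with some CAM of size $m\times m$. A connected graph $\Gamma$ is distance-regular if for all $u,v$ the numbers $|D_1(v)\cap D_{i-1}(u)|$, $|D_1(v)\cap D_i(u)|$, $|D_1(v)\cap D_{i+1}(u)|$ depend only on $i=d(u,v)$. *)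

(* Defs.v *)
From mathcomp Require Import all_boot all_order all_algebra.
Set Implicit Arguments. Unset Strict Implicit. Unset Printing Implicit Defensive.

Section Graphs.
Variable T : finType.
Variable e : rel T.

Definition simple_graph : Prop := symmetric e /\ irreflexive e.

Fixpoint nstep (k : nat) (u v : T) : bool :=
  match k with
  | 0 => u == v
  | k'.+1 => [exists w, e u w && nstep k' w v]
  end.

(* graph distance: least k with a walk of length k (meaningful for connected graphs,
   where it is < #|T|) *)
Definition dist (u v : T) : nat := find (fun k => nstep k u v) (iota 0 #|T|).

Definition connected_graph : Prop := forall u v : T, connect e u v.

Definition diam : nat := \max_(u : T) \max_(v : T) dist u v.

Definition sphere (i : nat) (u : T) : {set T} := [set v | dist u v == i].

Definition nbhd (y : T) : {set T} := [set x | e y x].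

(* Gamma is highly-regular with CAM C of size m x m.
   p u y is the index (0-based) of the class V_(p u y + 1)(u) containing y. *)
Definition hr_with_cam (m : nat) (C : 'M[nat]_m) : Prop :=
  [/\ 2 <= m, m <= #|T|, (m = #|T| -> #|T| = 2) &
   exists p : T -> T -> 'I_m,
     forall u : T,
       [/\ forall y : T, (val (p u y) == 0) = (y == u),
           forall i : 'I_m, exists y : T, p u y = i &
           forall (i j : 'I_m) (y : T), p u y = j ->
             #|nbhd y :&: [set x | p u x == i]| = C i j]].

Definition hr_size (m : nat) : Prop := exists C : 'M[nat]_m, hr_with_cam C.

Definition highly_regular : Prop := exists m : nat, hr_size m.

Definition index_is (m : nat) : Prop :=
  hr_size m /\ forall k : nat, k < m -> ~ hr_size k.

Definition distance_regular : Prop :=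
  connected_graph /\
  forall u v u' v' : T, dist u v = dist u' v' ->
    let i := dist u v in
    [/\ #|nbhd v :&: [set w | (0 < i) && (dist u w == i.-1)]|
          = #|nbhd v' :&: [set w | (0 < i) && (dist u' w == i.-1)]|,
        #|nbhd v :&: sphere i u| = #|nbhd v' :&: sphere i u'| &
        #|nbhd v :&: sphere i.+1 u| = #|nbhd v' :&: sphere i.+1 u'| ].

End Graphs.

(* Main.v *)
Require Import Defs.
From mathcomp Require Import all_boot all_order all_algebra.
From mathcomp Require Import zify.
Set Implicit Arguments. Unset Strict Implicit. Unset Printing Implicit Defensive.

Section DistTheory.
Variables (T : finType) (e : rel T).
Hypothesis esy : symmetric e.
Hypothesis econn : connected_graph e.

Lemma nstepSr k u v : nstep e k.+1 u v = [exists w, nstep e k u w && e w v].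
Proof.
elim: k u => [|k IH] u.
  rewrite /=; apply/existsP/existsP => [[w /andP[euw /eqP <-]]|[w /andP[/eqP <- euv]]].
    by exists u => /=; rewrite eqxx euw.
  by exists v => /=; rewrite euv eqxx.
transitivity [exists w, e u w && [exists x, nstep e k w x && e x v]].
  by apply: eq_existsb => w; rewrite -IH.
apply/existsP/existsP => [[w /andP[euw /existsP[x /andP[nk exv]]]]|[x /andP[nk exv]]].
  by exists x; rewrite exv andbT; apply/existsP; exists w; apply/andP.
move: nk => /existsP[w /andP[euw nk]].
by exists w; rewrite euw; apply/existsP; exists x; apply/andP.
Qed.

Lemma nstep_path p u : path e u p -> nstep e (size p) u (last u p).
Proof.
elim: p u => [|x p IH] u /=; first by rewrite eqxx.
by case/andP=> eux pp; apply/existsP; exists x; rewrite eux IH.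
Qed.

Lemma exists_short u v : exists2 k, k < #|T| & nstep e k u v.
Proof.
have /connectP[p pp ->] := econn u v.
case: (shortenP pp) => p' pp' up' _.
exists (size p'); last exact: nstep_path.
have := max_card (mem (u :: p')).
by rewrite (card_uniqP up').
Qed.

Lemma has_iota u v : has (fun k => nstep e k u v) (iota 0 #|T|).
Proof.
have [k kl nk] := exists_short u v.
by apply/hasP; exists k => //; rewrite mem_iota.
Qed.

Lemma dist_lt u v : dist e u v < #|T|.
Proof. by have := has_iota u v; rewrite has_find size_iota. Qed.

Lemma dist_nstep u v : nstep e (dist e u v) u v.
Proof.
have := nth_find 0 (has_iota u v).
by rewrite nth_iota ?dist_lt.
Qed.

Lemma dist_min u v k : nstep e k u v -> dist e u v <= k.
Proof.
move=> nk; rewrite leqNgt; apply/negP => lt.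
have kT : k < #|T| by apply: ltn_trans (dist_lt u v).
by have := before_find 0 lt; rewrite nth_iota // nk.
Qed.

Lemma dist_refl u : dist e u u = 0.
Proof. by apply/eqP; rewrite -leqn0; apply: dist_min => /=. Qed.

Lemma dist0 u v : dist e u v = 0 -> u = v.
Proof. by move=> d0; have := dist_nstep u v; rewrite d0 => /eqP. Qed.

Lemma dist_edge u x y : e x y -> dist e u y <= (dist e u x).+1.
Proof.
move=> exy; apply: dist_min; rewrite nstepSr; apply/existsP; exists x.
by rewrite exy dist_nstep.
Qed.

Lemma dist_pred u y k : dist e u y = k.+1 -> exists2 x, e x y & dist e u x = k.
Proof.
move=> dk; have := dist_nstep u y; rewrite dk nstepSr => /existsP[x /andP[nk exy]].
exists x => //; have := dist_min nk; have := dist_edge u exy; rewrite dk; lia.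
Qed.

Lemma descent u d k w : dist e u w = k + d -> exists w', dist e u w' = d.
Proof.
elim: k w => [|k IH] w; first by exists w.
rewrite addSn => /dist_pred[x _ dx]; exact: IH dx.
Qed.

Lemma dist_le_diam u v : dist e u v <= diam e.
Proof.
apply: leq_trans (leq_bigmax (F := fun v => dist e u v) v) _.
exact: (leq_bigmax (F := fun u => \max_v dist e u v) u).
Qed.

Lemma diam_pair : 0 < #|T| -> exists a b, dist e a b = diam e.
Proof.
move=> n0; have [a Ha] := eq_bigmax (fun u => \max_v dist e u v) n0.
have [b Hb] := eq_bigmax (fun v => dist e a v) n0.
by exists a, b; rewrite /diam Ha Hb.
Qed.

End DistTheory.
Section HR.
Variables (T : finType) (e : rel T).
Hypothesis esy : symmetric e.
Hypothesis econn : connected_graph e.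
Variables (m : nat) (C : 'M[nat]_m) (p : T -> T -> 'I_m).
Hypothesis H0 : forall u y, (val (p u y) == 0) = (y == u).
Hypothesis Hsurj : forall u (i : 'I_m), exists y, p u y = i.
Hypothesis Hcnt : forall u (i j : 'I_m) y, p u y = j ->
  #|nbhd e y :&: [set x | p u x == i]| = C i j.

Definition rep u (j : 'I_m) := odflt u [pick y | p u y == j].

Lemma repP u j : p u (rep u j) = j.
Proof.
rewrite /rep; case: pickP => [y /eqP //|H].
by have [y Hy] := Hsurj u j; move: (H y); rewrite Hy eqxx.
Qed.

Lemma inv_aux n : forall k, k <= n -> forall u u' y y',
  p u y = p u' y' -> dist e u y = k -> dist e u' y' = k.
Proof.
elim: n => [|n IH] k.
  rewrite leqn0 => /eqP -> u u' y y' puy /(dist0 econn) yu.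
  subst y; have := H0 u u; rewrite eqxx puy (H0 u' y') => /eqP ->.
  by rewrite (dist_refl econn).
rewrite leq_eqVlt ltnS => /orP[/eqP ->|]; last exact: IH.
move=> u u' y y' puy dy.
have [x exy dx] := dist_pred econn dy.
have : 0 < #|nbhd e y' :&: [set z | p u' z == p u x]|.
  rewrite (Hcnt (p u x) (esym puy)) -(Hcnt (p u x) (erefl (p u y))).
  by apply/card_gt0P; exists x; rewrite !inE esy exy eqxx.
move=> /card_gt0P[x' ]; rewrite !inE => /andP[ey'x' /eqP px'].
have dx' := IH n (leqnn n) u u' x x' (esym px') dx.
have le1 := dist_edge econn u' (y:=y') (x:=x'); rewrite esy ey'x' dx' in le1.
have := le1 isT; rewrite leq_eqVlt ltnS => /orP[/eqP //|le2].
have := IH _ le2 u' u y' y (esym puy) erefl; rewrite dy => h.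
by move: le2; rewrite -h ltnn.
Qed.

Lemma inv u u' y y' : p u y = p u' y' -> dist e u y = dist e u' y'.
Proof. by move=> h; rewrite (inv_aux (leqnn _) h erefl). Qed.

Lemma dist_bound u v : dist e u v < m.
Proof.
pose s := [seq dist e u (rep u j) | j <- enum 'I_m].
have : {subset iota 0 (dist e u v).+1 <= s}.
  move=> d; rewrite mem_iota add0n ltnS => /andP[_ dle].
  have [w dw] := descent econn (k := dist e u v - d) (d := d) (w := v) (u := u) ltac:(by rewrite subnK).
  apply/mapP; exists (p u w); first by rewrite mem_enum.
  by rewrite -dw; apply: inv; rewrite repP.
move=> /(uniq_leq_size (iota_uniq _ _)).
by rewrite size_iota size_map size_enum_ord.
Qed.

Lemma diam_lt : 0 < m -> diam e < m.
Proof.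
move=> m0; rewrite -(prednK m0) ltnS.
apply/bigmax_leqP => u _; apply/bigmax_leqP => v _.
by rewrite -ltnS prednK // dist_bound.
Qed.

Lemma count_cls (P : pred 'I_m) u v :
  #|nbhd e v :&: [set w | P (p u w)]| = \sum_(i | P i) C i (p u v).
Proof.
rewrite -sum1_card (partition_big (p u) P); last by move=> w; rewrite !inE => /andP[].
apply: eq_bigr => i Pi; rewrite -(Hcnt i (erefl (p u v))) -sum1_card.
by apply: eq_bigl => w; rewrite !inE; case: (p u w =P i) => [->|]; rewrite ?Pi ?andbT ?andbF.
Qed.

Section Eq.
Hypothesis Hm : m = (diam e).+1.
Variables a b : T.
Hypothesis Hab : dist e a b = diam e.

Lemma inj_a y y' : dist e a y = dist e a y' -> p a y = p a y'.
Proof.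
pose h j := dist e a (rep a j).
have hp z : h (p a z) = dist e a z by apply: inv; rewrite repP.
have : uniq [seq h j | j <- enum 'I_m].
  apply: (leq_size_uniq (iota_uniq 0 m)).
    move=> d; rewrite mem_iota add0n => /andP[_ dm].
    have dle : d <= dist e a b by rewrite Hab -ltnS -Hm.
    have [w dw] := descent econn (k := dist e a b - d) (d := d) (w := b) (u := a) ltac:(by rewrite subnK).
    by apply/mapP; exists (p a w); rewrite ?mem_enum // hp.
  by rewrite size_map size_enum_ord size_iota.
move=> U; have /injectiveP hi : injectiveb h by [].
by move=> E; apply: hi; rewrite !hp.
Qed.

Lemma key u v u' v' : dist e u v = dist e u' v' -> p u v = p u' v'.
Proof.
move=> E; rewrite -(repP a (p u v)) -(repP a (p u' v')); apply: inj_a.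
by rewrite (inv (repP a (p u v))) (inv (repP a (p u' v'))).
Qed.

Lemma DR_eq u v u' v' : dist e u v = dist e u' v' ->
    let i := dist e u v in
    [/\ #|nbhd e v :&: [set w | (0 < i) && (dist e u w == i.-1)]|
          = #|nbhd e v' :&: [set w | (0 < i) && (dist e u' w == i.-1)]|,
        #|nbhd e v :&: sphere e i u| = #|nbhd e v' :&: sphere e i u'| &
        #|nbhd e v :&: sphere e i.+1 u| = #|nbhd e v' :&: sphere e i.+1 u'| ].
Proof.
move=> E; have pk := key E; cbv zeta.
pose g j := dist e a (rep a j).
have gd z w : dist e z w = g (p z w) by apply: inv; rewrite repP.
have cnt (Q : pred nat) z w :
    #|nbhd e w :&: [set x | Q (dist e z x)]| = \sum_(i | Q (g i)) C i (p z w).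
  transitivity #|nbhd e w :&: [set x | (fun i => Q (g i)) (p z x)]|.
    by apply: eq_card => x; rewrite !inE gd.
  exact: count_cls.
split.
- have := cnt (fun d => (0 < dist e u v) && (d == (dist e u v).-1)) u v.
  have := cnt (fun d => (0 < dist e u v) && (d == (dist e u v).-1)) u' v'.
  by move=> /= -> ->; rewrite pk.
- have := cnt (fun d => d == dist e u v) u v.
  have := cnt (fun d => d == dist e u v) u' v'.
  by rewrite /sphere => /= -> ->; rewrite pk.
- have := cnt (fun d => d == (dist e u v).+1) u v.
  have := cnt (fun d => d == (dist e u v).+1) u' v'.
  by rewrite /sphere => /= -> ->; rewrite pk.
Qed.

End Eq.

End HR.

Section DRsec.
Variables (T : finType) (e : rel T).
Hypothesis esy : symmetric e.
Hypothesis econn : connected_graph e.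
Hypothesis hDR : forall u v u' v' : T, dist e u v = dist e u' v' ->
    let i := dist e u v in
    [/\ #|nbhd e v :&: [set w | (0 < i) && (dist e u w == i.-1)]|
          = #|nbhd e v' :&: [set w | (0 < i) && (dist e u' w == i.-1)]|,
        #|nbhd e v :&: sphere e i u| = #|nbhd e v' :&: sphere e i u'| &
        #|nbhd e v :&: sphere e i.+1 u| = #|nbhd e v' :&: sphere e i.+1 u'| ].
Variables a b : T.
Hypothesis Hab : dist e a b = diam e.

Lemma full_ecc u d : d <= diam e -> exists y, dist e u y = d.
Proof.
move=> dle; rewrite -Hab in dle.
have [w dw] := descent econn (k := dist e a b - d) (d := d) (w := b) (u := a)
  ltac:(by rewrite subnK).
elim: d w dw {dle} => [|d IH] w dw; first by exists u; rewrite (dist_refl econn).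
have [x exw dx] := dist_pred econn dw.
have [w' dw'] := IH x dx.
have E : dist e a x = dist e u w' by rewrite dx dw'.
have := hDR E; cbv zeta => -[_ _ h3].
have : 0 < #|nbhd e w' :&: sphere e (dist e a x).+1 u|.
  by rewrite -h3; apply/card_gt0P; exists w; rewrite !inE exw dw dx eqxx.
move=> /card_gt0P[y]; rewrite !inE => /andP[_ /eqP dy].
by exists y; rewrite dy dx.
Qed.

Lemma DR_count u y a' r (i : nat) : dist e u y = dist e a' r ->
  #|nbhd e y :&: sphere e i u| = #|nbhd e r :&: sphere e i a'|.
Proof.
move=> E; have := hDR E; cbv zeta => -[h1 h2 h3].
have empty z w : (forall j, j <= (dist e z w).+1 -> dist e z w <= j.+1 -> j != i) ->
    #|nbhd e w :&: sphere e i z| = 0.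
  move=> H; apply/eqP; rewrite cards_eq0; apply/eqP/setP => x; rewrite !inE.
  apply/negbTE; apply/andP => -[ewx /eqP dx].
  have := H (dist e z x) (dist_edge econn z ewx).
  have h2' : dist e z w <= (dist e z x).+1 by apply: (dist_edge econn); rewrite esy.
  by move/(_ h2'); rewrite dx eqxx.
case: (eqVneq i (dist e u y)) => [->|n1]; first exact: h2.
case: (eqVneq i (dist e u y).+1) => [->|n2]; first exact: h3.
case: (eqVneq i.+1 (dist e u y)) => [Hd|n3].
  have S z : [set w | (0 < dist e u y) && (dist e z w == (dist e u y).-1)] = sphere e i z.
    by apply/setP => w; rewrite /sphere !inE -Hd.
  by rewrite !S in h1.
rewrite !empty // => j; rewrite -?E => h h'; apply/eqP => ji; subst i;
  move: n1 n2 n3 => /eqP n1 /eqP n2 /eqP n3; lia.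
Qed.

End DRsec.

Section Cam.
Variables (T : finType) (e : rel T).
Hypothesis esy : symmetric e.
Hypothesis econn : connected_graph e.
Hypothesis hDR : forall u v u' v' : T, dist e u v = dist e u' v' ->
    let i := dist e u v in
    [/\ #|nbhd e v :&: [set w | (0 < i) && (dist e u w == i.-1)]|
          = #|nbhd e v' :&: [set w | (0 < i) && (dist e u' w == i.-1)]|,
        #|nbhd e v :&: sphere e i u| = #|nbhd e v' :&: sphere e i u'| &
        #|nbhd e v :&: sphere e i.+1 u| = #|nbhd e v' :&: sphere e i.+1 u'| ].
Variables a b : T.
Hypothesis Hab : dist e a b = diam e.
Hypothesis Hd1 : 0 < diam e.
Hypothesis HdT : (diam e).+1 <= #|T|.
Hypothesis HdT2 : (diam e).+1 = #|T| -> #|T| = 2.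

Definition rep' (j : nat) := odflt a [pick y | dist e a y == j].

Lemma rep'P j : j <= diam e -> dist e a (rep' j) = j.
Proof.
move=> jd; rewrite /rep'; case: pickP => [y /eqP //|H].
by have [y Hy] := full_ecc econn hDR Hab a jd; move: (H y); rewrite Hy eqxx.
Qed.

Lemma cam_exists : hr_size e (diam e).+1.
Proof.
have dle u y : dist e u y < (diam e).+1 by rewrite ltnS dist_le_diam.
exists ((\matrix_(i < (diam e).+1, j < (diam e).+1) #|nbhd e (rep' j) :&: sphere e i a|)%R).
split => //.
exists (fun u y => inord (dist e u y)) => u; split.
- move=> y /=; rewrite inordK //.
  by apply/eqP/eqP => [/(dist0 econn) ->|->] //; rewrite (dist_refl econn).
- move=> i; have [y dy] : exists y, dist e u y = val i.
    by apply: (full_ecc econn hDR Hab); rewrite -ltnS ltn_ord.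
  by exists y; apply: val_inj; rewrite /= dy inordK ?ltn_ord.
- move=> i j y <-; rewrite mxE.
  have -> : [set x | inord (dist e u x) == i] = sphere e i u.
    by apply/setP => x; rewrite /sphere !inE -(inj_eq val_inj) /= inordK.
  apply: (DR_count esy econn hDR Hab).
  by rewrite rep'P ?inordK // dist_le_diam.
Qed.

End Cam.

Unset Implicit Arguments.
Set Strict Implicit.

Theorem corollary3p2 (T : finType) (e : rel T) :
  simple_graph e -> connected_graph e -> highly_regular e ->
  (index_is e (diam e).+1 <-> distance_regular e).
Proof.
move=> [esy _] conn [m0 [C0 [m02 m0T m0T2 [p0 Hp0]]]].
have lt_of_cam m (C : 'M[nat]_m) : hr_with_cam e C -> diam e < m.
  move=> [m2 _ _ [p Hp]].
  apply: (diam_lt esy conn (C := C) (p := p)); last by apply: leq_trans m2.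
  - by move=> u; case: (Hp u).
  - by move=> u; case: (Hp u).
  - by move=> u; case: (Hp u).
have H0lt := lt_of_cam _ _ (And4 m02 m0T m0T2 (ex_intro _ p0 Hp0)).
have n0 : 0 < #|T| by apply: leq_trans m0T; apply: leq_trans m02.
have [a [b Hab]] := diam_pair e n0.
split.
- move=> [[C [m2 mT mT2 [p Hp]]] _]; split => // u v u' v'.
  have H0 : forall u y, (val (p u y) == 0) = (y == u) by move=> u1; case: (Hp u1).
  have Hs : forall u (i : 'I_(diam e).+1), exists y, p u y = i by move=> u1; case: (Hp u1).
  have Hc : forall u (i j : 'I_(diam e).+1) y, p u y = j ->
    #|nbhd e y :&: [set x | p u x == i]| = C i j by move=> u1; case: (Hp u1).
  exact: (DR_eq esy conn H0 Hs Hc erefl Hab).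
- move=> [_ hDR]; split.
    apply: (cam_exists esy conn hDR Hab).
    + have /card_gt1P[x [y [_ _ xy]]] : 1 < #|T| by apply: leq_trans m0T.
      have := dist_le_diam e x y; case: (posnP (dist e x y)) => [/(dist0 conn) xy'|].
        by move: xy; rewrite xy' eqxx.
      by move=> /leq_trans; apply.
    + exact: leq_trans m0T.
    + move=> dT; apply: m0T2; apply/eqP; rewrite eqn_leq m0T -dT; exact: H0lt.
  move=> k kd [C HC]; have := lt_of_cam _ _ HC.
  by rewrite ltnNge -ltnS kd.
Qed.
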